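(* Let $h$ be a reduced function, $n\ge4$, and let $E^{(n)}$ and $\mathcal E^{(n)}$ be defined on pure states by $$E^{(n)}(|\psi\rangle)=\frac12\sum_{i=1}^n h(\rho^{A_i}),\qquad \mathcal E^{(n)}(|\psi\rangle)=\frac12\sum_{S\in\mathcal T_n}h(\rho^S),$$ where $\mathcal T_n$ is the set of nonempty subsets $S\subseteq\{A_1,\dots,A_n\}$ with $|S|<n/2$ together with (for even $n$) those with $|S|=n/2$ and $A_n\notin S$. Then for every pure state $|\psi\rangle\in\mathcal H^{A_1\cdots A_n}$, $E^{(n)}(|\psi\rangle)\le\mathcal E^{(n)}(|\psi\rangle)$, with strict inequality if and only if $|\psi\rangle$ is not fully separable, i.e. not of the form $|\psi_1\rangle^{A_1}\otimes\cdots\otimes|\psi_n\rangle^{A_n}$.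
   Context: All Hilbert spaces are finite-dimensional; $\rho^X$ denotes the reduced state of $|\psi\rangle$ on the set $X$ of parties. Reduced function: a function $h$ from density matrices (of any finite dimension) to $[0,\infty)$ that is concave, depends only on the multiset of nonzero eigenvalues of its argument, and satisfies $h(\rho)=0$ iff $\rho$ is pure. *)

(* Defs.v *)
From HB Require Import structures.
From mathcomp Require Import all_boot all_order all_algebra.
From mathcomp Require Import complex.
From mathcomp Require Import reals.

Set Implicit Arguments.
Unset Strict Implicit.
Unset Printing Implicit Defensive.

Import Order.TTheory GRing.Theory Num.Theory.
Local Open Scope ring_scope.

Section QInfo.
Variable R : realType.
Local Notation C := R[i].

Definition adjmx m k (A : 'M[C]_(m, k)) : 'M[C]_(k, m) := (map_mx Num.conj A)^T.

Definition density m (rho : 'M[C]_m) : Prop :=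
  [/\ adjmx rho = rho,
      (forall v : 'cV[C]_m, 0 <= (adjmx v *m rho *m v) 0 0)
    & \tr rho = 1].

Definition pure_dm m (rho : 'M[C]_m) : Prop :=
  exists v : 'cV[C]_m, rho = v *m adjmx v.

(* same multiset of nonzero eigenvalues: every nonzero complex number has the
   same multiplicity as a root of the characteristic polynomials *)
Definition same_nz_spectrum m k (rho : 'M[C]_m) (sigma : 'M[C]_k) : Prop :=
  forall l : C, l != 0 -> mup l (char_poly rho) = mup l (char_poly sigma).

Definition reduced_function (h : forall m, 'M[C]_m -> R) : Prop :=
  [/\ (forall m (rho : 'M[C]_m), density rho -> 0 <= h m rho),
      (forall m (rho sigma : 'M[C]_m) (t : R), density rho -> density sigma ->
          0 <= t <= 1 ->
          t * h m rho + (1 - t) * h m sigma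
            <= h m ((real_complex R t) *: rho + (real_complex R (1 - t)) *: sigma)),
      (forall m k (rho : 'M[C]_m) (sigma : 'M[C]_k), density rho -> density sigma ->
          same_nz_spectrum rho sigma -> h m rho = h k sigma)
    & (forall m (rho : 'M[C]_m), density rho -> (h m rho = 0 <-> pure_dm rho))].

(* n parties, party i has local dimension (d i).+1 >= 1 *)
Variables (n : nat) (d : 'I_n -> nat).

(* computational basis labels of H^{A_1...A_n} *)
Definition cfg := {dffun forall i : 'I_n, 'I_(d i).+1}.

(* basis labels of H^S, represented by full labels that are 0 outside S *)
Definition subcfg (S : {set 'I_n}) :=
  {x : cfg | [forall i, (i \notin S) ==> (x i == ord0)]}.

Definition glue (S : {set 'I_n}) (x z : cfg) : cfg :=
  [ffun i => if i \in S then x i else z i].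

(* reduced state rho^S of the (pure) state psi : partial trace over ~: S *)
Definition redmx (psi : cfg -> C) (S : {set 'I_n}) : 'M[C]_#|{: subcfg S}| :=
  \matrix_(a, b)
    \sum_(z : subcfg (~: S))
       psi (glue S (val (enum_val a)) (val z))
     * Num.conj (psi (glue S (val (enum_val b)) (val z))).

Definition normalized (psi : cfg -> C) : Prop :=
  \sum_(x : cfg) psi x * Num.conj (psi x) = 1.

Definition fully_separable (psi : cfg -> C) : Prop :=
  exists phi : forall i : 'I_n, 'I_(d i).+1 -> C,
    forall x : cfg, psi x = \prod_(i < n) phi i (x i).

(* T_n : nonempty S with |S| < n/2, or |S| = n/2 and A_n (index n-1) not in S *)
Definition Tn : pred {set 'I_n} := fun S =>
  (S != set0) &&
  ((#|S|.*2 < n)%N || ((#|S|.*2 == n)%N && [forall i in S, (i : nat) != n.-1])).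

Definition E_n (h : forall m, 'M[C]_m -> R) (psi : cfg -> C) : R :=
  2^-1 * \sum_(i < n) h _ (redmx psi [set i]).

Definition EE_n (h : forall m, 'M[C]_m -> R) (psi : cfg -> C) : R :=
  2^-1 * \sum_(S : {set 'I_n} | Tn S) h _ (redmx psi S).

End QInfo.

(* Main.v *)
Require Import Defs.
From HB Require Import structures.
From mathcomp Require Import all_boot all_order all_algebra.
From mathcomp Require Import complex.
From mathcomp Require Import reals.
From mathcomp Require Import ring lra zify.
Import Order.TTheory GRing.Theory Num.Theory.
Local Open Scope ring_scope.
Set Implicit Arguments.
Unset Strict Implicit.
Unset Printing Implicit Defensive.

Section Aux.
Variables (R : realType) (n : nat) (d : 'I_n -> nat).
Local Notation C := R[i].
Local Notation cfg := (cfg d).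

Lemma glueE (S : {set 'I_n}) (x z : cfg) i : glue S x z i = if i \in S then x i else z i.
Proof. by rewrite ffunE. Qed.

Definition projf (S : {set 'I_n}) (x : cfg) : cfg :=
  [ffun i => if i \in S then x i else ord0].

Lemma projf_ok (S : {set 'I_n}) x : [forall i, (i \notin S) ==> (projf S x i == ord0)].
Proof. apply/forallP=> i; apply/implyP=> hi; by rewrite ffunE (negbTE hi). Qed.

Definition projS (S : {set 'I_n}) x : subcfg d S := exist _ (projf S x) (projf_ok S x).

Lemma projE (S : {set 'I_n}) x i : val (projS S x) i = if i \in S then x i else ord0.
Proof. by rewrite /= ffunE. Qed.

Lemma sub_out S (s : subcfg d S) i : i \notin S -> val s i = ord0.
Proof. move=> hi; have := valP s => /forallP /(_ i) /implyP /(_ hi) /eqP; done. Qed.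

Lemma sum_split (S : {set 'I_n}) (F : cfg -> C) :
  \sum_x F x = \sum_(s : subcfg d S) \sum_(z : subcfg d (~: S)) F (glue S (val s) (val z)).
Proof.
rewrite pair_big /=.
rewrite (reindex (fun p : subcfg d S * subcfg d (~:S) => glue S (val p.1) (val p.2))) //=.
apply: onW_bij; exists (fun x => (projS S x, projS (~:S) x)).
- move=> [s z] /=; congr pair; apply/val_inj/ffunP=> i; rewrite projE glueE;
    case: (boolP (i \in S)) => hi; rewrite ?inE ?hi //=; rewrite sub_out // ?inE ?hi //.
- move=> x; apply/ffunP=> i; rewrite glueE !projE inE; by case: (i \in S).
Qed.

Lemma sum_enum (S : {set 'I_n}) (G : subcfg d S -> C) :
  \sum_(a < #|{: subcfg d S}|) G (enum_val a) = \sum_s G s.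
Proof. by rewrite -big_enum_val. Qed.


Definition UU (psi : cfg -> C) (S : {set 'I_n}) (s : subcfg d S) (z : subcfg d (~: S)) :=
  psi (glue S (val s) (val z)).

Lemma redmxE (psi : cfg -> C) (S : {set 'I_n}) a b : redmx psi S a b =
  \sum_z UU psi (enum_val a) z * (UU psi (enum_val b) z)^*.
Proof. by rewrite mxE. Qed.

Lemma redmx_density (psi : cfg -> C) (S : {set 'I_n}) : normalized psi -> density (redmx psi S).
Proof.
move=> hpsi; split.
- apply/matrixP=> a b; rewrite /adjmx !mxE rmorph_sum; apply: eq_bigr => z _.
  by rewrite rmorphM /= conjCK mulrC.
- move=> v.
  pose w z := \sum_a (v a 0)^* * UU psi (enum_val a) z.
  have -> : (adjmx v *m redmx psi S *m v) 0 0 = \sum_z w z * (w z)^*.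
    rewrite !mxE.
    transitivity (\sum_b \sum_a \sum_z ((v a 0)^* * UU psi (enum_val a) z) *
                     (v b 0 * (UU psi (enum_val b) z)^*)).
      apply: eq_bigr => b _; rewrite mxE mulr_suml; apply: eq_bigr => a _.
      rewrite !mxE mulr_sumr mulr_suml; apply: eq_bigr => z _; rewrite /= /UU; ring.
    rewrite exchange_big /=; symmetry.
    under eq_bigr do rewrite rmorph_sum mulr_suml.
    under eq_bigr do under eq_bigr do rewrite mulr_sumr.
    rewrite exchange_big /=; apply: eq_bigr => a _.
    rewrite exchange_big /=; apply: eq_bigr => b _; apply: eq_bigr => z _.
    by rewrite rmorphM /= conjCK.
  by apply: sumr_ge0 => z _; apply: mul_conjC_ge0.
- rewrite /mxtrace; under eq_bigr do rewrite redmxE.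
  rewrite (sum_enum (fun s => \sum_z UU psi s z * (UU psi s z)^*)).
  by rewrite -(sum_split S (fun x => psi x * (psi x)^*)).
Qed.

Lemma glue_proj (S : {set 'I_n}) (x y : cfg) :
  glue S (val (projS S x)) (val (projS (~: S) y)) = glue S x y.
Proof. by apply/ffunP=> i; rewrite !glueE !projE inE; case: (i \in S). Qed.

Lemma glue_id (S : {set 'I_n}) (x : cfg) : glue S x x = x.
Proof. by apply/ffunP=> i; rewrite !glueE; case: (i \in S). Qed.

Lemma pure_exchange (psi : cfg -> C) (S : {set 'I_n}) :
  normalized psi -> pure_dm (redmx psi S) ->
  forall x y, psi x * psi y = psi (glue S x y) * psi (glue S y x).
Proof.
move=> hpsi [v hv].
pose V (s : subcfg d S) : C := v (enum_rank s) 0.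
have hr : forall s t, \sum_z UU psi s z * (UU psi t z)^* = V s * (V t)^*.
  move=> s t; have := hv; move/matrixP=> /(_ (enum_rank s) (enum_rank t)).
  by rewrite redmxE !enum_rankK => ->; rewrite !mxE big_ord1 !mxE.
have h2 : forall s t z, V t * UU psi s z = V s * UU psi t z.
  move=> s t z; apply/eqP; rewrite -subr_eq0; apply/eqP.
  pose w z := V t * UU psi s z - V s * UU psi t z.
  have e : forall z, w z * (w z)^* =
    (V t * (V t)^*) * (UU psi s z * (UU psi s z)^*)
    - (V t * (V s)^*) * (UU psi s z * (UU psi t z)^*)
    - (V s * (V t)^*) * (UU psi t z * (UU psi s z)^*)
    + (V s * (V s)^*) * (UU psi t z * (UU psi t z)^*).
    by move=> z'; rewrite /w rmorphB !rmorphM /=; ring.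
  have hs : \sum_z w z * (w z)^* = 0.
    rewrite (eq_bigr _ (fun z _ => e z)) big_split /= !sumrB -!mulr_sumr !hr; ring.
  have := psumr_eq0P (fun z _ => mul_conjC_ge0 (w z)) hs (i := z) isT.
  by move/eqP; rewrite mul_conjC_eq0 => /eqP.
have [c hc|hV] := pickP (fun s => V s != 0); last first.
  exfalso; have [_ _ htr] := redmx_density S hpsi.
  move: htr; rewrite hv /mxtrace big1; first by move/eqP; rewrite eq_sym oner_eq0.
  move=> a _.
  rewrite !mxE big_ord1 !mxE.
  have := hV (enum_val a); rewrite /V enum_valK /= => /negbFE/eqP ->.
  by rewrite mul0r.
move=> x y.
have ex : forall (s t : subcfg d S) (z z0 : subcfg d (~: S)), UU psi s z * UU psi t z0 = UU psi s z0 * UU psi t z.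
  move=> s t z z0; apply: (mulfI (mulf_neq0 hc hc)).
  have a1 := h2 s c z; have a2 := h2 t c z0; have a3 := h2 s c z0; have a4 := h2 t c z.
  transitivity ((V c * UU psi s z) * (V c * UU psi t z0)); first ring.
  rewrite a1 a2; transitivity ((V c * UU psi s z0) * (V c * UU psi t z)); last ring.
  rewrite a3 a4; ring.
have := ex (projS S x) (projS S y) (projS (~: S) x) (projS (~: S) y).
by rewrite /UU !glue_proj !glue_id.
Qed.

Lemma sep_pure (psi : cfg -> C) (S : {set 'I_n}) :
  fully_separable psi -> pure_dm (redmx psi S).
Proof.
move=> [phi hphi].
pose F (s : subcfg d S) := \prod_(i in S) phi i (val s i).
pose G (z : subcfg d (~: S)) := \prod_(i in ~: S) phi i (val z i).
have hU : forall s z, UU psi s z = F s * G z.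
  move=> s z; rewrite /UU hphi (bigID (fun i => i \in S)) /=; congr (_ * _).
    by apply: eq_bigr => i hi; rewrite glueE hi.
  rewrite /G; under [RHS]eq_bigl do rewrite inE.
  by apply: eq_bigr => i hi; rewrite glueE (negbTE hi).
pose N := \sum_z G z * (G z)^*.
have hN : 0 <= N by apply: sumr_ge0 => z _; apply: mul_conjC_ge0.
exists (\col_a (F (enum_val a) * sqrtC N)).
apply/matrixP=> a b; rewrite redmxE !mxE big_ord1 !mxE.
under eq_bigr do rewrite !hU.
have hs : 0 <= sqrtC N by rewrite sqrtC_ge0.
rewrite rmorphM /= (geC0_conj hs).
transitivity (F (enum_val a) * (F (enum_val b))^* * N).
  rewrite /N mulr_sumr; apply: eq_bigr => z _; rewrite rmorphM /=; ring.
rewrite -{1}(sqrtCK N) expr2; ring.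
Qed.

Lemma glueC (S : {set 'I_n}) (x y : cfg) : glue S y x = glue (~: S) x y.
Proof. by apply/ffunP=> i; rewrite !glueE inE; case: (i \in S). Qed.

Section Fixed.
Variables (psi : cfg -> C) (y0 : cfg).
Hypothesis hy0 : psi y0 != 0.
Local Notation p0 := (psi y0).
Definition gg (S : {set 'I_n}) x := glue S x y0.
Definition Ex0 (S : {set 'I_n}) := forall x, psi x * p0 = psi (gg S x) * psi (gg (~: S) x).

Lemma gg_gg A B x : gg A (gg B x) = gg (A :&: B) x.
Proof. by apply/ffunP=> i; rewrite !glueE inE; case: (i \in A); case: (i \in B). Qed.

Lemma gg0 x : gg set0 x = y0.
Proof. by apply/ffunP=> i; rewrite !glueE inE. Qed.

Lemma ggT x : gg setT x = x.
Proof. by apply/ffunP=> i; rewrite !glueE inE. Qed.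

Lemma Ex0_full S : (forall x y, psi x * psi y = psi (glue S x y) * psi (glue S y x)) -> Ex0 S.
Proof. by move=> h x; rewrite /gg h (glueC S x y0). Qed.

Lemma Ex0C S : Ex0 S -> Ex0 (~: S).
Proof. by move=> h x; rewrite h setCK mulrC. Qed.

Lemma four S T : Ex0 S -> Ex0 T -> forall x, psi x * p0 ^+ 3 =
  psi (gg (T :&: S) x) * psi (gg (~:T :&: S) x) *
  psi (gg (T :&: ~:S) x) * psi (gg (~:T :&: ~:S) x).
Proof.
move=> hS hT x; have h1 := hS x; have h2 := hT (gg S x); have h3 := hT (gg (~:S) x).
rewrite !gg_gg in h2 h3.
transitivity ((psi x * p0) * p0 * p0); first ring.
rewrite h1; transitivity ((psi (gg S x) * p0) * (psi (gg (~:S) x) * p0)); first ring.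
rewrite h2 h3; ring.
Qed.

Lemma Ex0I S T : Ex0 S -> Ex0 T -> Ex0 (S :&: T).
Proof.
move=> hS hT x.
have hx := four hS hT x.
have hx' := four hS hT (gg (~: (S :&: T)) x).
rewrite !gg_gg in hx'.
have e1 : (T :&: S) :&: ~: (S :&: T) = set0.
  by apply/setP=> i; rewrite !inE; case: (i \in S); case: (i \in T).
have e2 : (~:T :&: S) :&: ~: (S :&: T) = ~:T :&: S.
  by apply/setP=> i; rewrite !inE; case: (i \in S); case: (i \in T).
have e3 : (T :&: ~:S) :&: ~: (S :&: T) = T :&: ~:S.
  by apply/setP=> i; rewrite !inE; case: (i \in S); case: (i \in T).
have e4 : (~:T :&: ~:S) :&: ~: (S :&: T) = ~:T :&: ~:S.
  by apply/setP=> i; rewrite !inE; case: (i \in S); case: (i \in T).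
rewrite e1 e2 e3 e4 gg0 in hx'.
have e5 : T :&: S = S :&: T by rewrite setIC.
rewrite e5 in hx.
apply: (mulIf (expf_neq0 3 hy0)).
transitivity (p0 * (psi x * p0 ^+ 3)); first ring.
rewrite hx.
transitivity (psi (gg (S :&: T) x) * (psi (gg (~: (S :&: T)) x) * p0 ^+ 3)); last ring.
rewrite hx'; ring.
Qed.

Lemma prod_sets (h1 : forall i, Ex0 [set i]) x :
  forall A : {set 'I_n}, psi (gg A x) * p0 ^+ #|A| = p0 * \prod_(j in A) psi (gg [set j] x).
Proof.
move=> A; have [k hA] : exists k, #|A| = k by eexists.
elim: k A hA => [|k IH] A hA.
  move/eqP: hA; rewrite cards_eq0 => /eqP ->.
  by rewrite gg0 big_set0 cards0 expr0 !mulr1.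
have [j hj] : exists j, j \in A.
  by apply/set0Pn; rewrite -card_gt0 hA.
rewrite (big_setD1 j hj) /=.
have hk : #|A :\ j| = k by move: hA; rewrite (cardsD1 j A) hj add1n => -[].
have := h1 j (gg A x); rewrite !gg_gg.
have -> : [set j] :&: A = [set j].
  by apply/setP=> i; rewrite !inE; case: eqP => // ->.
have -> : ~: [set j] :&: A = A :\ j.
  by apply/setP=> i; rewrite !inE.
move=> e.
rewrite hA exprS; set q := p0 ^+ k.
transitivity ((psi (gg A x) * p0) * q); first ring.
rewrite e.
transitivity (psi (gg [set j] x) * (psi (gg (A :\ j) x) * p0 ^+ #|A :\ j|)); first by rewrite hk /q; ring.
rewrite IH //; ring.
Qed.

Lemma sep_of_singletons (h1 : forall i, Ex0 [set i]) (n0 : (0 < n)%N) :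
  fully_separable psi.
Proof.
pose c (i : 'I_n) : C := if val i == 0%N then p0^-1 ^+ n.-1 else 1.
exists (fun i a => (if [pick xa : cfg | xa i == a] is Some xa
                   then psi (gg [set i] xa) else 0) * c i) => x.
have hphi : forall i, (if [pick xa : cfg | xa i == x i] is Some xa
                   then psi (gg [set i] xa) else 0) * c i = psi (gg [set i] x) * c i.
  move=> i; case: pickP => [xa /eqP hxa | hN]; last by have := hN x; rewrite eqxx.
  congr (psi _ * _); apply/ffunP => j; rewrite !glueE !inE.
  by case: eqP => // ->.
under eq_bigr do rewrite hphi.
rewrite big_split /=.
have hc : \prod_(i < n) c i = p0^-1 ^+ n.-1.
  rewrite (bigD1 (Ordinal n0)) //= big1 ?mulr1; first by rewrite /c eqxx.
  move=> i hi; rewrite /c ifF //; apply: contraNF hi => /eqP h.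
  by apply/eqP/val_inj.
rewrite hc.
have hp := prod_sets h1 x setT; rewrite ggT cardsT card_ord in hp.
have hP : \prod_(i < n) psi (gg [set i] x) = psi x * p0 ^+ n.-1.
  have e : \prod_(j in [set: 'I_n]) psi (gg [set j] x) = \prod_(i < n) psi (gg [set i] x).
    by apply: eq_bigl => i; rewrite in_setT.
  rewrite e in hp; apply: (mulfI hy0); rewrite -hp.
  by rewrite -[in LHS](prednK n0) exprS; ring.
by rewrite hP exprVn mulfK // expf_neq0.
Qed.

End Fixed.

Lemma pairs_Tn (hn : (4 <= n)%N) (i j : 'I_n) : i != j ->
  (Tn [set i; j] && (#|[set i; j]| != 1%N)) ||
  (Tn (~: [set i; j]) && (#|~: [set i; j]| != 1%N)).
Proof.
move=> hij.
have c2 : #|[set i; j]| = 2%N by rewrite cards2 hij.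
have cC : #|~: [set i; j]| = (n - 2)%N.
  have e := cardsC [set i; j]; rewrite c2 card_ord in e; lia.
have ne : [set i; j] != set0 by apply/set0Pn; exists i; rewrite !inE eqxx.
case: (ltngtP 4 n) => [h4|h4|h4].
- by rewrite /Tn c2 ne /= h4.
- by move: hn; rewrite leqNgt h4.
- have e1 : (n - 2).*2 = n by rewrite -h4.
  have e2 : (n - 2)%N != 1%N by rewrite -h4.
  have e3 : (2.*2 == n) = true by rewrite -h4.
  case hv: ((n.-1 == val i) || (n.-1 == val j)).
  + apply/orP; right; rewrite /Tn cC e1 ltnn eqxx e2 /= andbT; apply/andP; split.
      by rewrite -card_gt0 cC -h4.
    apply/forallP=> k; apply/implyP; rewrite !inE negb_or.
    case/andP=> hki hkj; move: hv.
    by case/orP=> /eqP e; [apply: contra hki | apply: contra hkj] => /eqP ek;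
      apply/eqP/val_inj; rewrite /= ek e.
  + apply/orP; left; rewrite /Tn c2 ne e3 /= andbT; apply/orP; right.
    apply/forallP=> k; apply/implyP; rewrite !inE.
    move: hv => /negbT; rewrite negb_or => /andP[hi hj].
    by case/orP=> /eqP ->; rewrite eq_sym.
Qed.

Lemma single_Tn (hn : (4 <= n)%N) (i : 'I_n) : Tn [set i].
Proof.
rewrite /Tn cards1; apply/andP; split.
  by apply/set0Pn; exists i; rewrite inE.
by apply/orP; left; apply: leq_trans hn.
Qed.

Lemma three (hn : (4 <= n)%N) (i : 'I_n) :
  exists j k : 'I_n, [/\ i != j, i != k & j != k].
Proof.
have h0 : (0 < n)%N by apply: leq_trans hn.
have h1 : (1 < n)%N by apply: leq_trans hn.
have h2 : (2 < n)%N by apply: leq_trans hn.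
pose o0 := Ordinal h0; pose o1 := Ordinal h1; pose o2 := Ordinal h2.
have d01 : o0 != o1 by []. have d02 : o0 != o2 by []. have d12 : o1 != o2 by [].
case: (eqVneq i o0) => [->|n0]; first by exists o1, o2.
case: (eqVneq i o1) => [->|n1]; first by exists o0, o2; rewrite eq_sym.
by exists o0, o1.
Qed.

End Aux.

Lemma main_aux (R : realType) (h : forall m, 'M[R[i]]_m -> R)
  (hred : reduced_function h) (n : nat) (hn : (4 <= n)%N) (d : 'I_n -> nat)
  (psi : cfg d -> R[i]) (hpsi : normalized psi) :
  E_n h psi <= EE_n h psi /\ (E_n h psi < EE_n h psi <-> ~ fully_separable psi).
Proof.
have [hge hconc hspec hzero] := hred.
pose F (S : {set 'I_n}) := h _ (redmx psi S).
have hF0 : forall S, 0 <= F S by move=> S; apply: hge; apply: redmx_density.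
have hFz : forall S, F S = 0 <-> pure_dm (redmx psi S).
  by move=> S; apply: hzero; apply: redmx_density.
pose Rest := \sum_(S : {set 'I_n} | Tn S && (#|S| != 1%N)) F S.
have hRest : 0 <= Rest by apply: sumr_ge0 => S _.
have hsplit : \sum_(S : {set 'I_n} | Tn S) F S = \sum_(i < n) F [set i] + Rest.
  rewrite (bigID (fun S : {set 'I_n} => #|S| == 1%N)) /=; congr (_ + _).
  have -> : \sum_(S : {set 'I_n} | Tn S && (#|S| == 1%N)) F S =
            \sum_(S in [set [set i] | i : 'I_n]) F S.
    apply: eq_bigl => S; apply/idP/idP.
      by case/andP=> _ /cards1P [x ->]; apply/imsetP; exists x.
    by case/imsetP=> x _ ->; rewrite single_Tn // cards1.
  by rewrite big_imset //= => x y _ _; apply: set1_inj.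
have eE : E_n h psi = 2^-1 * \sum_(i < n) F [set i] by [].
have eEE : EE_n h psi = 2^-1 * (\sum_(i < n) F [set i] + Rest) by rewrite -hsplit.
rewrite eE eEE; set A := \sum_(i < n) F [set i].
split; first lra.
split.
- move=> hlt hsep.
  have : Rest = 0.
    apply: big1 => S _; apply/hFz; exact: sep_pure.
  lra.
- move=> hns.
  suff : Rest != 0 by rewrite neq_lt => /orP[]; lra.
  apply/eqP=> hR0; apply: hns.
  have hz := psumr_eq0P (fun S _ => hF0 S) hR0.
  have [y0 hy0|hN] := pickP (fun x => psi x != 0); last first.
    exfalso; move: hpsi; rewrite /normalized big1; first by move/eqP; rewrite eq_sym oner_eq0.
    by move=> x _; have := hN x => /negbFE/eqP ->; rewrite mul0r.
  have hEx : forall S, Tn S -> (#|S| != 1%N) -> Ex0 psi y0 S.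
    move=> S hS hS1; apply: Ex0_full; apply: pure_exchange => //.
    by apply/hFz; apply: hz; rewrite hS hS1.
  have hpair : forall i j : 'I_n, i != j -> Ex0 psi y0 [set i; j].
    move=> i j hij; case/orP: (pairs_Tn hn hij) => /andP[h1 h2].
      exact: hEx.
    by rewrite -(setCK [set i; j]); apply: Ex0C; apply: hEx.
  apply: (sep_of_singletons hy0); last by apply: leq_trans hn.
  move=> i; have [j [k [hij hik hjk]]] := three hn i.
  have -> : [set i] = [set i; j] :&: [set i; k].
    apply/setP=> l; rewrite !inE; case: (eqVneq l i) => //= _.
    apply/esym/negP => /andP[/eqP ej /eqP ek]; move: hjk; by rewrite -ej -ek eqxx.
  by apply: Ex0I => //; apply: hpair.
Qed.

Theorem mainTheorem4 (R : realType) (h : forall m, 'M[R[i]]_m -> R)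
  (hred : reduced_function h) (n : nat) (hn : (4 <= n)%N) (d : 'I_n -> nat)
  (psi : cfg d -> R[i]) (hpsi : normalized psi) :
  E_n h psi <= EE_n h psi /\ (E_n h psi < EE_n h psi <-> ~ fully_separable psi).
Proof. exact: main_aux. Qed.

Print Assumptions mainTheorem4.
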